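(* For $n\ge1$ and $0\le i\le\lfloor (n-1)/2\rfloor$, $b(n+1,i+1,n)=P(n,i)$, where $P(n,i)$ is the number of permutations $\pi\in\mathfrak{S}_n$ with exactly $i$ interior peaks.
   Context: An interior peak of $\pi\in\mathfrak{S}_n$ is an index $m\in\{2,\dots,n-1\}$ with $\pi(m-1)<\pi(m)>\pi(m+1)$. The integers $b(n,i,j)$ ($n\ge1$) are defined by $b(1,0,0)=1$, $b(1,i,j)=0$ for $(i,j)\ne(0,0)$, $b(n,i,j)=0$ if $i<0$ or $j<0$, and $b(n+1,i,j)=b(n,i,j)+2i\,b(n,i,j-1)+(n-2i+2)\,b(n,i-1,j-1)$. *)

(* Defs.v *)
From mathcomp Require Import all_boot all_order all_algebra all_fingroup.
Set Implicit Arguments. Unset Strict Implicit. Unset Printing Implicit Defensive.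
Import GRing.Theory Num.Theory.
Local Open Scope ring_scope.

(* b n i j, with i j ranging over int so that the convention b(n,i,j)=0 for
   i<0 or j<0 is built in. n = 0 is outside the paper's range (value 0). *)
Fixpoint b (n : nat) (i j : int) {struct n} : int :=
  match n with
  | 0%N => 0
  | 1%N => if (i == 0) && (j == 0) then 1 else 0
  | (m.+1) as n' =>
      if (i < 0) || (j < 0) then 0 else
      b m i j + (2 * i) * b m i (j - 1)
        + ((m%:Z) - 2 * i + 2) * b m (i - 1) (j - 1)
  end.

(* interior peaks of a permutation of {1..n}, positions 0-indexed:
   m with 1 <= m <= n-2 and pi(m-1) < pi(m) > pi(m+1). *)
Definition is_interior_peak (n : nat) (pi : 'S_n) (m : nat) : bool :=
  [exists h : ('I_n * 'I_n * 'I_n),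
     [&& nat_of_ord h.1.1 == m.-1, nat_of_ord h.1.2 == m,
         nat_of_ord h.2 == m.+1, 0 < m,
         pi h.1.1 < pi h.1.2 & pi h.2 < pi h.1.2]%N].

Definition num_interior_peaks (n : nat) (pi : 'S_n) : nat :=
  #|[set m : 'I_n | is_interior_peak pi m]|.

Definition P (n i : nat) : nat := #|[set pi : 'S_n | num_interior_peaks pi == i]|.

(* Main.v *)
Require Import Defs.
From mathcomp Require Import all_boot all_order all_algebra all_fingroup.
From mathcomp Require Import zify.

Definition hw (x : nat) (s : seq nat) : nat :=
  match s with b :: c :: _ => ((x < b) && (c < b))%N | _ => 0%N end.
Fixpoint peaks (s : seq nat) : nat :=
  match s with [::] => 0%N | x :: s' => (hw x s' + peaks s')%N end.
Fixpoint pkat (s : seq nat) (j : nat) : nat :=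
  match s, j with
  | x :: s', j'.+1 => if j' is 0 then hw x s' else pkat s' j'
  | _, _ => 0%N end.
Fixpoint ins (N k : nat) (t : seq nat) : seq nat :=
  match k, t with
  | 0, _ => N :: t
  | k'.+1, x :: t' => x :: ins N k' t'
  | _.+1, [::] => [:: N] end.

Lemma insE N k t : ins N k t = take k t ++ N :: drop k t.
Proof. by elim: t k => [|x t IH] [|k] //=; rewrite IH. Qed.
Lemma insE0 N t : ins N 0 t = N :: t. Proof. by []. Qed.
Lemma insES N k x t : ins N k.+1 (x :: t) = x :: ins N k t. Proof. by []. Qed.

Lemma pkat0 t : pkat t 0 = 0%N. Proof. by case: t. Qed.

Lemma hw_ins N x j t : j.+2 <= size t -> hw x (ins N j.+2 t) = hw x t.
Proof. by case: t => [|y [|z t]]. Qed.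

Lemma key N t k : all (fun x => x < N) t -> k <= size t ->
  peaks (ins N k t) + pkat t k.-1 + pkat t k = peaks t + (0 < k < size t).
Proof.
elim: t k => [|x t IH] [|k] //=.
- move=> /andP [xN aN] _; rewrite ?insE0 /=.
  by clear IH; case: t aN => [|y [|z t]] //= /andP[yN _]; rewrite ltnNge (ltnW xN) /= ?addn0.
- move=> /andP [xN aN] kt; rewrite ?insES /=.
  case: k kt => [|j] kt.
  + rewrite ?insE0 /= ?pkat0.
    clear IH; case: t aN kt => [|y t] //= /andP [yN _] _; rewrite xN yN /=.
    case: t => [|z t] /=; lia.
  + case: j kt => [|j] kt.
    * have := IH 1%N aN kt; rewrite /= pkat0.
      clear IH; case: t aN kt => [|y t] //= /andP [yN _] _.
      have -> : (N < y) = false by lia.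
      rewrite andbF /=. lia.
    * have := IH j.+2 aN kt; rewrite /= (hw_ins N x j t kt). lia.
Qed.

Lemma pk_le1 t j : pkat t j <= 1.
Proof.
elim: t j => [|x t IH] [|[|j]] //=.
by case: t {IH} => [|y [|z t]] //=; case: (_ && _).
Qed.

Lemma pk_pos t j : 0 < pkat t j -> (0 < j) && (j.+1 < size t).
Proof.
elim: t j => [|x t IH] [|[|j]] //=.
- by case: t {IH} => [|y [|z t]].
- by move/IH => /andP[_ H] /=; rewrite ltnS.
Qed.

Lemma pk_adj t j : 0 < pkat t j.+1 -> pkat t j.+2 = 0.
Proof.
elim: t j => [|x t IH] [|j] //=.
- case: t {IH} => [|y [|z t]] //=; rewrite lt0b => /andP[_ H].
  case: t => [|w t] //=. by rewrite ltnNge (ltnW H) /=.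
- by case: j IH => [|j] IH //= /IH.
Qed.

Lemma pk_bound t k : pkat t k.-1 + pkat t k <= (0 < k < size t).
Proof.
case: k => [|k] /=; first by rewrite pkat0.
case: k => [|k].
- rewrite pkat0 add0n; have := pk_pos t 1; have := pk_le1 t 1.
  case: (pkat t 1) => [|[|]] //= _ /(_ isT) H; lia.
- have := pk_pos t k.+1; have := pk_pos t k.+2; have := pk_le1 t k.+1.
  have := pk_le1 t k.+2; have := pk_adj t k.
  case: (pkat t k.+1) => [|[|]] //=; case: (pkat t k.+2) => [|[|]] //=.
  + by move=> _ _ _ /(_ isT) H; lia.
  + by move=> _ _ _ _ /(_ isT) H; lia.
  + by move=> /(_ isT).
Qed.

Lemma pk_sum t : \sum_(k < size t) pkat t k = peaks t.
Proof.
elim: t => [|x t IH]; first by rewrite big_ord0.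
rewrite big_ord_recl /=.
case: t IH => [|y t] IH; first by rewrite big_ord0.
rewrite -IH.
change (size [:: x, y & t]) with (size t).+2; change (size (y :: t)) with (size t).+1.
rewrite !big_ord_recl add0n.
have -> : pkat (y :: t) ord0 = 0 by [].
rewrite add0n; congr (_ + _); apply: eq_bigr => i _ //.
Qed.

Lemma pk_size t j : size t <= j.+1 -> pkat t j = 0.
Proof.
move=> H; case E: (pkat t j) => [|m] //.
have := pk_pos t j; rewrite E /= => /(_ isT) /andP[_]; lia.
Qed.

Lemma sum_e n : \sum_(k < n.+1) (0 < k < n) = n.-1.
Proof.
rewrite big_ord_recr /= ltnn andbF addn0.
rewrite (eq_bigr (fun k : 'I_n => (0 < k : nat))); last by move=> k _; rewrite ltn_ord andbT.
case: n => [|n]; first by rewrite big_ord0.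
rewrite big_ord_recl /= add0n (eq_bigr (fun _ => 1)) //.
by rewrite sum_nat_const card_ord muln1.
Qed.

Lemma count_t N t i : all (fun x => x < N) t -> 0 < size t ->
  \sum_(k < (size t).+1) (peaks (ins N k t) == i) =
  (peaks t == i) * (2 * i + 2) + ((peaks t).+1 == i) * ((size t).+1 - 2 * i).
Proof.
move=> aN st.
set p := peaks t; set n := size t.
pose d (k : nat) := (0 < k < n) - pkat t k.-1 - pkat t k.
have hd : forall k : 'I_n.+1, peaks (ins N k t) = p + d k.
  move=> k; have := key N t k aN (ltn_ord k); have := pk_bound t k.
  rewrite /d /p /n; lia.
have d1 : forall k, d k <= 1.
  move=> k; rewrite /d; have : (0 < k < n : nat) <= 1 by case: (0 < k < n).
  lia.
have hs : \sum_(k < n.+1) d k + 2 * p = n.-1.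
  have e1 : \sum_(k < n.+1) (d k + pkat t k.-1 + pkat t k) = n.-1.
    rewrite -sum_e; apply: eq_bigr => k _; have := pk_bound t k; rewrite /d /n; lia.
  rewrite !big_split /= in e1.
  have ha : \sum_(k < n.+1) pkat t k.-1 = p.
    rewrite big_ord_recl /p -pk_sum -/n.
    have -> : pkat t (nat_of_ord (ord0 : 'I_n.+1)).-1 = 0 by apply: pkat0.
    by rewrite add0n; apply: eq_bigr.
  have hc : \sum_(k < n.+1) pkat t k = p.
    by rewrite big_ord_recr /= pk_size // addn0 pk_sum.
  by rewrite ha hc in e1; rewrite mul2n -addnn addnA.
rewrite (eq_bigr (fun k : 'I_n.+1 => (p == i) * (1 - d k) + (p.+1 == i) * d k)); last first.
  move=> k _; rewrite hd; have := d1 k.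
  by case: (d k) => [|[|]] // _ /=; rewrite ?addn0 ?addn1 ?muln0 ?muln1 ?addn0 ?add0n.
rewrite big_split /= -!big_distrr /=.
have h1 : \sum_(k < n.+1) (1 - d k) = n.+1 - \sum_(k < n.+1) d k.
  have : \sum_(k < n.+1) (1 - d k) + \sum_(k < n.+1) d k = n.+1.
    rewrite -big_split /= (eq_bigr (fun _ => 1)); last by move=> k _; have := d1 k; lia.
    by rewrite sum_nat_const card_ord muln1.
  lia.
rewrite h1. set D := \sum_(k < n.+1) d k. move: hs; rewrite -/D => hs. have n1 : 0 < n by []. clearbody D p n d. clear h1 hd d1.
case: eqP => [e|ne]; case: eqP => [e1|ne1] /=; lia.
Qed.

Lemma pk_sumA t : \sum_(k < (size t).+1) pkat t k.-1 = peaks t.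
Proof.
rewrite big_ord_recl -pk_sum.
have -> : pkat t (nat_of_ord (ord0 : 'I_(size t).+1)).-1 = 0 by apply: pkat0.
by rewrite add0n; apply: eq_bigr.
Qed.

Lemma pk_sumC t : \sum_(k < (size t).+1) pkat t k = peaks t.
Proof. by rewrite big_ord_recr /= pk_size // addn0 pk_sum. Qed.

Lemma peaks_bound t : 2 * peaks t <= (size t).-1.
Proof.
have H : \sum_(k < (size t).+1) (pkat t k.-1 + pkat t k) <=
   \sum_(k < (size t).+1) (0 < k < size t) by apply: leq_sum => k _; apply: pk_bound.
rewrite big_split /= pk_sumA pk_sumC sum_e in H; lia.
Qed.

Fixpoint L n : seq (seq nat) :=
  if n is m.+1 then [seq ins m k t | t <- L m, k <- iota 0 m.+1] else [:: [::]].

Lemma L_prop n t : t \in L n -> (size t = n) /\ perm_eq t (iota 0 n).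
Proof.
elim: n t => [|n IH] t; first by rewrite inE => /eqP ->.
move/allpairsP => [[s k] [/= sL _ ->]].
have [sz pe] := IH s sL.
rewrite insE size_cat /= addnS -size_cat cat_take_drop sz; split => //.
rewrite -[_ ++ _]/(take k s ++ [:: n] ++ drop k s) perm_catCA /= cat_take_drop.
rewrite -[0 :: iota 1 n]/(iota 0 n.+1) -addn1 iotaD add0n /= cats1.
by rewrite perm_sym perm_rcons perm_cons perm_sym.
Qed.

Lemma index_ins N k t : N \notin t -> k <= size t -> index N (ins N k t) = k.
Proof.
move=> Nt kt; rewrite insE index_cat.
have -> : (N \in take k t) = false by apply/negbTE; apply: contra Nt; apply: mem_take.
by rewrite /= eqxx addn0 size_take_min; apply/minn_idPl.
Qed.

Lemma take_ins N k t : k <= size t -> take k (ins N k t) = take k t.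
Proof. by elim: t k => [|x t IH] [|k] //= H; rewrite IH. Qed.
Lemma drop_ins N k t : k <= size t -> drop k.+1 (ins N k t) = drop k t.
Proof. by elim: t k => [|x t IH] [|k] //= H; rewrite IH. Qed.

Lemma ins_inj N k1 k2 t1 t2 : N \notin t1 -> N \notin t2 -> k1 <= size t1 -> k2 <= size t2 ->
  ins N k1 t1 = ins N k2 t2 -> k1 = k2 /\ t1 = t2.
Proof.
move=> n1 n2 s1 s2 E.
have ek : k1 = k2 by rewrite -(index_ins N k1 t1 n1 s1) -(index_ins N k2 t2 n2 s2) E.
subst k2; split => //.
by rewrite -[t1](cat_take_drop k1) -(take_ins N k1 t1 s1) -(drop_ins N k1 t1 s1) E
  take_ins // drop_ins // cat_take_drop.
Qed.

Lemma L_notin n t : t \in L n -> n \notin t.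
Proof. by case/L_prop => _ /perm_mem ->; rewrite mem_iota ltnn andbF. Qed.

Lemma L_uniq n : uniq (L n).
Proof.
elim: n => [|n IH] //.
apply: (allpairs_uniq (f := fun t k => ins n k t) IH (iota_uniq 0 n.+1)).
move=> [t1 k1] [t2 k2] H1 H2.
case/allpairsP: H1 => [[a b] [aL bI E1]]; case: E1 => -> ->.
case/allpairsP: H2 => [[c d] [cL dI E2]]; case: E2 => -> -> /= E.
have bn : b <= n by move: bI; rewrite mem_iota.
have dn : d <= n by move: dI; rewrite mem_iota.
have [sa _] := L_prop n a aL; have [sc _] := L_prop n c cL.
have sa1 : b <= size a by rewrite sa. 
have sc1 : d <= size c by rewrite sc.
have [-> ->] := ins_inj n b d a c (L_notin n a aL) (L_notin n c cL) sa1 sc1 E. by [].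
Qed.

Lemma L_size n : size (L n) = n`!.
Proof.
elim: n => [|n IH] //.
have -> : L n.+1 = [seq ins n k t | t <- L n, k <- iota 0 n.+1] by [].
by rewrite size_allpairs IH size_iota factS mulnC.
Qed.

Definition cnt n i := \sum_(t <- L n) (peaks t == i).

Section IntPart.
Import GRing.Theory.
Local Open Scope ring_scope.

Lemma count_tZ n t i : (0 < n)%N -> t \in L n ->
  (\sum_(k <- iota 0 n.+1) (peaks (ins n k t) == i))%:Z =
  (peaks t == i)%:Z * (2 * i%:Z + 2) + ((peaks t).+1 == i)%:Z * (n%:Z + 1 - 2 * i%:Z).
Proof.
move=> n0 tL; have [st pe] := L_prop n t tL.
have aN : all (fun x => x < n)%N t.
  by rewrite (perm_all _ pe); apply/allP => x; rewrite mem_iota.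
rewrite (_ : iota 0 n.+1 = index_iota 0 n.+1); last by rewrite /index_iota subn0.
rewrite big_mkord.
have := count_t n t i aN; rewrite st => /(_ n0) ->.
have := peaks_bound t; rewrite st.
case: eqP => [e|ne]; case: eqP => [e1|ne1] /=; lia.
Qed.

Lemma cnt_rec n i : (0 < n)%N ->
  (cnt n.+1 i)%:Z = (2 * i%:Z + 2) * (cnt n i)%:Z +
     (n%:Z + 1 - 2 * i%:Z) * (if i is i'.+1 then cnt n i' else 0%N)%:Z.
Proof.
move=> n0; rewrite /cnt.
have -> : L n.+1 = [seq ins n k t | t <- L n, k <- iota 0 n.+1] by [].
rewrite big_allpairs_dep /= -natz natr_sum.
rewrite (eq_big_seq (fun t => (peaks t == i)%:Z * (2 * i%:Z + 2) +
    ((peaks t).+1 == i)%:Z * (n%:Z + 1 - 2 * i%:Z))); last first.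
  by move=> t tL; rewrite natz count_tZ.
rewrite big_split /= -!mulr_suml.
rewrite [X in X + _]mulrC; congr (_ + _).
  by congr (_ * _); rewrite -natz natr_sum; apply: eq_bigr => t _; rewrite natz.
rewrite mulrC; congr (_ * _); case: i => [|i].
  by rewrite big1.
by rewrite -natz natr_sum; apply: eq_bigr => t _; rewrite natz eqSS.
Qed.

End IntPart.

Lemma pk_nth s j : pkat s j = [&& 0 < j, j.+1 < size s,
  nth 0 s j.-1 < nth 0 s j & nth 0 s j.+1 < nth 0 s j] :> nat.
Proof.
elim: s j => [|x s IH] [|[|j]] //=.
by case: s {IH} => [|y [|z s]] //=; rewrite andbC.
Qed.

Definition fS n (pi : 'S_n) : seq nat := [seq (pi x : nat) | x <- enum 'I_n].
Arguments fS {n}.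

Lemma fS_nth n (pi : 'S_n) (x : 'I_n) : nth 0 (fS pi) x = pi x.
Proof. by rewrite /fS (nth_map x) ?size_enum_ord ?nth_ord_enum. Qed.

Lemma fS_size n (pi : 'S_n) : size (fS pi) = n.
Proof. by rewrite /fS size_map size_enum_ord. Qed.

Lemma fS_inj n : injective (@fS n).
Proof. by move=> p q E; apply/permP => x; apply: val_inj; rewrite /= -!fS_nth E. Qed.

Lemma fS_perm n (pi : 'S_n) : perm_eq (fS pi) (iota 0 n).
Proof.
rewrite /fS -val_enum_ord (map_comp val pi); apply: perm_map.
apply: uniq_perm; first by rewrite map_inj_uniq ?enum_uniq //; apply: perm_inj.
  exact: enum_uniq.
move=> x; rewrite mem_enum; apply/mapP; exists (pi^-1 x)%g; first by rewrite mem_enum.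
by rewrite permKV.
Qed.

Lemma peaks_fS n (pi : 'S_n) : num_interior_peaks pi = peaks (fS pi).
Proof.
rewrite /num_interior_peaks -pk_sum fS_size -sum1_card big_mkcond /=.
apply: eq_bigr => m _; rewrite inE pk_nth fS_size.
have -> : is_interior_peak pi m = [&& 0 < m, m.+1 < n,
  nth 0 (fS pi) m.-1 < nth 0 (fS pi) m & nth 0 (fS pi) m.+1 < nth 0 (fS pi) m].
  apply/existsP/idP.
  - case=> [[[a b] c]] /= /andP[/eqP ea /andP[/eqP eb /andP[/eqP ec /andP[m0 /andP[l1 l2]]]]].
    rewrite m0 -ea -ec -eb !fS_nth l1 l2 /= andbT.
    exact: ltn_ord.
  - case/and4P => m0 mn l1 l2.
    have ha : m.-1 < n by lia.
    have hc : m.+1 < n by [].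
    exists (Ordinal ha, m, Ordinal hc); rewrite /= !eqxx m0 /=.
    move: l1 l2; rewrite -(fS_nth _ pi (Ordinal ha)) -(fS_nth _ pi m) -(fS_nth _ pi (Ordinal hc)) /=.
    by move=> -> ->.
by case: (_ && _).
Qed.

Lemma perm_fS_L n : perm_eq [seq fS pi | pi <- enum 'S_n] (L n).
Proof.
have U1 : uniq [seq fS pi | pi <- enum 'S_n].
  by rewrite map_inj_uniq ?enum_uniq //; apply: fS_inj.
have sP : size (permutations (iota 0 n)) = n`!.
  by rewrite size_permutations ?iota_uniq // size_iota.
have sub1 : {subset [seq fS pi | pi <- enum 'S_n] <= permutations (iota 0 n)}.
  by move=> s /mapP [pi _ ->]; rewrite mem_permutations fS_perm.
have sz1 : size (permutations (iota 0 n)) <= size [seq fS pi | pi <- enum 'S_n].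
  by rewrite sP size_map -cardE card_Sn.
have sub2 : {subset L n <= permutations (iota 0 n)}.
  by move=> s /L_prop [_ ?]; rewrite mem_permutations.
have sz2 : size (permutations (iota 0 n)) <= size (L n) by rewrite sP L_size.
have [_ h1] := uniq_min_size U1 sub1 sz1.
have [_ h2] := uniq_min_size (L_uniq n) sub2 sz2.
by apply: uniq_perm => //; [exact: L_uniq | move=> s; rewrite h1 h2].
Qed.

Lemma P_cnt n i : P n i = cnt n i.
Proof.
rewrite /P /cnt -(perm_big _ (perm_fS_L n)) big_map -sum1_card big_mkcond /=.
rewrite big_enum /= [RHS]big_mkcond /=.
apply: eq_bigr => pi _; rewrite inE peaks_fS.
by case: (_ == _).
Qed.

Section BPart.
Import GRing.Theory Num.Theory.
Local Open Scope ring_scope.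

Lemma bS m i j : b m.+2 i j = if (i < 0) || (j < 0) then 0 else
  b m.+1 i j + (2 * i) * b m.+1 i (j - 1) + ((m.+1)%:Z - 2 * i + 2) * b m.+1 (i - 1) (j - 1).
Proof. by []. Qed.

Lemma PoszS k : (Posz k.+1 - 1 = Posz k)%R.
Proof. lia. Qed.

Lemma b_neg m i j : i < 0 -> b m i j = 0.
Proof.
move=> hi; case: m => [|[|m]] //.
  by rewrite /= (_ : (i == 0) = false) //; apply/negbTE; rewrite ltr0_neq0.
by rewrite bS hi.
Qed.

Lemma b_vanish m i j : (m.+1)%:Z <= j -> b m.+1 i j = 0.
Proof.
elim: m i j => [|m IH] i j hj.
  by rewrite /= (_ : (j == 0) = false) ?andbF //; apply/negbTE; lia.
rewrite bS; case: ifP => // _.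
rewrite IH ?(IH i) ?(IH (i - 1)); try lia.
Qed.

Lemma b_i0 m j : b m.+1 0 j = (j == 0)%:Z.
Proof.
elim: m j => [|m IH] j; first by rewrite /=; case: (j == 0).
rewrite bS Order.POrderTheory.ltxx orFb mulr0 mul0r addr0 (b_neg m.+1 (0 - 1)); last by [].
rewrite mulr0 addr0.
case: (ltrP j 0) => hj.
  by rewrite (_ : (j == 0) = false) //; apply/negbTE; rewrite ltr0_neq0.
by rewrite IH.
Qed.

Lemma main_b n i : (1 <= n)%N -> b n.+1 (i.+1)%:Z n%:Z = (cnt n i)%:Z.
Proof.
case: n => [//|n] _.
elim: n i => [|n IH] i.
  rewrite bS /=.
  have -> : cnt 1 i = (0 == i)%N by rewrite /cnt /= big_cons big_nil addn0.
  by case: i => [|i] /=; rewrite ?mulr0 ?addr0 ?mul0r //=.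
rewrite bS (_ : (_ || _) = false) //.
rewrite (b_vanish n.+1 _ (Posz n.+2)) // add0r !PoszS (IH i).
rewrite (cnt_rec n.+1 i) //.
case: i => [|i].
  rewrite b_i0 (_ : (Posz n.+1 == 0) = false) //; lia.
rewrite (IH i); lia.
Qed.

Theorem corollary7' (n i : nat) :
  (1 <= n)%N -> (i <= (n - 1)./2)%N ->
  b n.+1 (i.+1)%:Z n%:Z = (P n i)%:Z.
Proof. by move=> n1 _; rewrite P_cnt main_b. Qed.

End BPart.

Local Open Scope ring_scope.

Theorem corollary7 (n i : nat) :
  (1 <= n)%N -> (i <= (n - 1)./2)%N ->
  b n.+1 (i.+1)%:Z n%:Z = (P n i)%:Z.
Proof. exact: corollary7'. Qed.
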